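(* Every graph of pathwidth at most $2$ and order $n$ has at most $4^{n/3}$ induced matchings. The bound is attained by the triangle $K_3$.
   Context: An induced matching of a graph $G=(V,E)$ is here a set $D\subseteq V$ such that every vertex of $D$ has exactly one neighbour in $D$ (a $(\{1\},\mathbb{N})$-dominating set); the empty set counts. Equivalently, a set of edges $M$ such that the subgraph induced by the endpoints of $M$ has edge set $M$. Order = number of vertices; pathwidth is the standard notion. *)

(* Defs.v *)
From mathcomp Require Import all_boot.
Set Implicit Arguments. Unset Strict Implicit. Unset Printing Implicit Defensive.

Definition simple_graph (T : finType) (e : rel T) : Prop :=
  symmetric e /\ irreflexive e.

Definition induced_matching (T : finType) (e : rel T) (D : {set T}) : bool :=
  [forall x in D, #|[set y in D | e x y]| == 1].

(* Number of induced matchings (the empty set counts). *)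
Definition num_induced_matchings (T : finType) (e : rel T) : nat :=
  #|[set D : {set T} | induced_matching e D]|.

Definition path_decomposition (T : finType) (e : rel T) (B : seq {set T}) : Prop :=
  (forall x : T, exists2 X, X \in B & x \in X) /\
  (forall x y : T, e x y -> exists2 X, X \in B & (x \in X) && (y \in X)) /\
  (forall (x : T) (i j k : nat), i <= j -> j <= k -> k < size B ->
      x \in nth set0 B i -> x \in nth set0 B k -> x \in nth set0 B j).

(* Width = max bag size - 1; pathwidth <= k iff a decomposition of width <= k exists. *)
Definition pathwidth_le (T : finType) (e : rel T) (k : nat) : Prop :=
  exists B : seq {set T}, path_decomposition e B /\ all (fun X : {set T} => #|X| <= k.+1) B.

Definition K3 : rel 'I_3 := fun i j => i != j.

(* Main.v *)
Require Import Defs.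
From mathcomp Require Import all_boot.
Set Implicit Arguments. Unset Strict Implicit.

Lemma card_bigcup_le (T I : finType) (P : pred I) (F : I -> {set T}) :
  #|\bigcup_(i | P i) F i| <= \sum_(i | P i) #|F i|.
Proof.
apply: (big_ind2 (fun (X : {set T}) n => #|X| <= n)) => //.
- by rewrite cards0.
- move=> X1 n1 X2 n2 h1 h2.
  apply: leq_trans (leq_card_setU X1 X2).1 _; exact: leq_add.
Qed.

Section IM.
Variables (T : finType) (e : rel T).
Hypothesis esym : symmetric e.
Hypothesis eirr : irreflexive e.

Definition im (D : {set T}) := induced_matching e D.
Definition cnt (S : {set T}) := #|[set D : {set T} | (D \subset S) && im D]|.
Definition NS (S : {set T}) x := [set y in S | e x y].
Definition Nc x := x |: [set y | e x y].

Lemma im_ex (D : {set T}) x : im D -> x \in D -> exists2 y, y \in D & e x y.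
Proof.
move=> /forallP /(_ x) /implyP H xD; have := H xD.
case/cards1P => y Hy; exists y.
- by have := set11 y; rewrite -Hy inE => /andP[].
- by have := set11 y; rewrite -Hy inE => /andP[].
Qed.

Lemma im_uniq (D : {set T}) x y z : im D -> x \in D -> y \in D -> z \in D -> e x y -> e x z -> y = z.
Proof.
move=> /forallP /(_ x) /implyP H xD yD zD exy exz; have := H xD.
case/cards1P => p Hp.
have : y \in [set y in D | e x y] by rewrite inE yD exy.
have : z \in [set y in D | e x y] by rewrite inE zD exz.
by rewrite Hp !inE => /eqP -> /eqP ->.
Qed.

Lemma cnt_mono (S1 S2 : {set T}) : S1 \subset S2 -> cnt S1 <= cnt S2.
Proof.
move=> sub; apply: subset_leq_card; apply/subsetP => D; rewrite !inE.
by case/andP => h ->; rewrite (subset_trans h sub).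
Qed.

Lemma F1 (S : {set T}) v : v \in S ->
  cnt S <= cnt (S :\ v) + \sum_(u in NS S v) cnt (S :\: (Nc u :|: Nc v)).
Proof.
move=> vS.
set A := [set D : {set T} | (D \subset S) && im D].
rewrite /cnt -/A -(cardsID [set D : {set T} | v \notin D] A).
apply: leq_add.
  apply: subset_leq_card; apply/subsetP => D; rewrite !inE => /andP[] /andP[] sDS -> nvD.
  rewrite andbT; apply/subsetP => x xD; rewrite !inE (subsetP sDS _ xD) andbT.
  by apply: contraNneq nvD => <-.
set A1 := A :\: _.
have sub : A1 \subset \bigcup_(u in NS S v)
   [set D in A1 | u \in D].
  apply/subsetP => D; rewrite !inE negbK => /andP[] vD /andP[] sDS imD.
  have [u uD evu] := im_ex imD vD.
  apply/bigcupP; exists u; first by rewrite inE (subsetP sDS _ uD) evu.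
  by rewrite !inE vD sDS imD uD.
apply: leq_trans (subset_leq_card sub) _.
apply: leq_trans (card_bigcup_le _ _) _.
rewrite [X in _ <= X]big_mkcond /= [X in X <= _]big_mkcond /=.
apply: leq_sum => u _; case: ifP => // /[!inE] /andP[] uS evu.
set X := [set u; v].
have -> : #|[set D in A1 | u \in D]| = #|[set D :\: X | D in [set D in A1 | u \in D]]|.
  rewrite card_in_imset //.
  move=> D1 D2; rewrite !inE !negbK => /andP[] /andP[] vD1 _ uD1 /andP[] /andP[] vD2 _ uD2 eqD.
  have sX1 : X \subset D1 by rewrite subUset !sub1set uD1 vD1.
  have sX2 : X \subset D2 by rewrite subUset !sub1set uD2 vD2.
  by rewrite -(setID D1 X) -(setID D2 X) eqD (setIidPr sX1) (setIidPr sX2).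
apply: subset_leq_card; apply/subsetP => D' /imsetP[D].
rewrite !inE negbK => /andP[] /andP[] vD /andP[] sDS imD uD ->.
have euv : e u v by rewrite esym.
have nu : forall y, y \in D -> e u y -> y = v.
  by move=> y yD euy; apply: (im_uniq imD uD yD vD euy euv).
have nv : forall y, y \in D -> e v y -> y = u.
  by move=> y yD evy; apply: (im_uniq imD vD yD uD evy evu).
apply/andP; split.
  apply/subsetP => y; rewrite !inE negb_or => /andP[] /andP[] yu yv yD.
  rewrite (subsetP sDS _ yD) andbT !negb_or yu yv /=.
  apply/andP; split; apply/negP => H.
  - by move: yv; rewrite (nu y yD H) eqxx.
  - by move: yu; rewrite (nv y yD H) eqxx.
apply/forallP => x; apply/implyP; rewrite !inE negb_or => /andP[] /andP[] xu xv xD.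
move: imD => /forallP /(_ x) /implyP /(_ xD) H.
suff -> : [set y in D :\: X | e x y] = [set y in D | e x y] by [].
apply/setP => y; rewrite !inE; case yD: (y \in D); rewrite ?andbF //=.
case exy: (e x y); rewrite ?andbF ?andbT //=.
rewrite negb_or; apply/andP; split; apply/negP => /eqP Hy; subst y.
- by move: xv; rewrite (nu x xD) ?eqxx // esym.
- by move: xu; rewrite (nv x xD) ?eqxx // esym.
Qed.


Lemma F1_0 (S : {set T}) v : v \in S -> NS S v = set0 -> cnt S <= cnt (S :\ v).
Proof. by move=> vS H; have := F1 vS; rewrite H big_set0 addn0. Qed.

Lemma F1_1 (S : {set T}) v u : v \in S -> NS S v = [set u] ->
  cnt S <= cnt (S :\ v) + cnt (S :\: (Nc u :|: Nc v)).
Proof. by move=> vS H; have := F1 vS; rewrite H big_set1. Qed.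

Lemma F1_2 (S : {set T}) v u w : v \in S -> NS S v = [set u; w] -> u != w ->
  cnt S <= cnt (S :\ v) + cnt (S :\: (Nc u :|: Nc v)) + cnt (S :\: (Nc w :|: Nc v)).
Proof.
move=> vS H uw; have := F1 vS; rewrite H big_setU1 ?inE //= big_set1 addnA //.
Qed.

Lemma excl (S X Y : {set T}) : X \subset S -> Y \subset S ->
  (forall x, x \in Y -> x \notin X) -> #|X| + #|Y| <= #|S|.
Proof.
move=> sX sY dXY.
have -> : #|X| + #|Y| = #|X :|: Y|.
  rewrite cardsU; suff -> : X :&: Y = set0 by rewrite cards0 subn0.
  by apply/setP => x; rewrite !inE; case xY: (x \in Y); rewrite ?andbF ?andbT // (negbTE (dXY x xY)).
by apply: subset_leq_card; rewrite subUset sX sY.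
Qed.

Lemma excl1 (S X : {set T}) a : X \subset S -> a \in S -> a \notin X -> #|X| + 1 <= #|S|.
Proof.
move=> sX aS aX; rewrite -(cards1 a); apply: excl => //; first by rewrite sub1set.
by move=> x; rewrite inE => /eqP ->.
Qed.

Lemma excl2 (S X : {set T}) a b : X \subset S -> a \in S -> b \in S -> a != b ->
  a \notin X -> b \notin X -> #|X| + 2 <= #|S|.
Proof.
move=> sX aS bS ab aX bX; have -> : 2 = #|[set a; b]| by rewrite cards2 ab. apply: excl => //.
  by rewrite subUset !sub1set aS bS.
by move=> x; rewrite !inE => /orP[] /eqP ->.
Qed.

Lemma excl3 (S X : {set T}) a b c : X \subset S -> a \in S -> b \in S -> c \in S ->
  a != b -> a != c -> b != c ->
  a \notin X -> b \notin X -> c \notin X -> #|X| + 3 <= #|S|.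
Proof.
move=> sX aS bS cS ab ac bc aX bX cX.
have -> : 3 = #|[set a; b; c]|.
  by rewrite -!setUA !cardsU1 cards1 !inE !negb_or ab ac bc.
apply: excl => //; first by rewrite !subUset !sub1set aS bS cS.
by move=> x; rewrite !inE => /orP[/orP[]|] /eqP ->.
Qed.

Lemma excl4 (S X : {set T}) a b c d : X \subset S -> a \in S -> b \in S -> c \in S -> d \in S ->
  a != b -> a != c -> a != d -> b != c -> b != d -> c != d ->
  a \notin X -> b \notin X -> c \notin X -> d \notin X -> #|X| + 4 <= #|S|.
Proof.
move=> sX aS bS cS dS ab ac ad bc bd cd aX bX cX dX.
have -> : 4 = #|[set a; b; c; d]|.
  by rewrite -!setUA !cardsU1 cards1 !inE !negb_or ab ac ad bc bd cd.
apply: excl => //; first by rewrite !subUset !sub1set aS bS cS dS.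
by move=> x; rewrite !inE => /orP[/orP[/orP[]|]|] /eqP ->.
Qed.

End IM.

From Stdlib Require Import Reals Lra Psatz.
From mathcomp Require Import zify.
Definition r := Rpower (/4) (/3).
Lemma r_pos : (0 < r)%R. Proof. unfold r, Rpower. apply exp_pos. Qed.
Lemma r3 : (r ^ 3 = /4)%R.
Proof. rewrite <- Rpower_pow by apply r_pos. unfold r. rewrite Rpower_mult.
replace (/3 * INR 3)%R with 1%R by (simpl; field). apply Rpower_1. lra. Qed.
Lemma r_le : (r <= 16/25)%R.
Proof. pose proof r_pos; pose proof r3. simpl in H0. nra. Qed.
Lemma rfacts : (r + r^3 <= 1 /\ 2 * r^2 <= 1 /\ r + 2 * r^4 <= 1 /\ r^2 + r^3 + 2*r^4 <= 1 /\ 4 * r^3 <= 1 /\ r <= 1)%R.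
Proof. pose proof r_pos; pose proof r3; pose proof r_le. simpl in *. repeat split; nra. Qed.

Lemma cl2 (x a b : nat) R p q : x <= a + b -> (0 <= R)%R -> (INR a * R <= p)%R ->
  (INR b * R <= q)%R -> (p + q <= 1)%R -> (INR x * R <= 1)%R.
Proof.
move=> /leP H R0 h1 h2 h3; apply le_INR in H; rewrite plus_INR in H.
have := Rmult_le_compat_r _ _ _ R0 H. lra.
Qed.

Lemma cl3 (x a b c : nat) R p q s : x <= a + b + c -> (0 <= R)%R -> (INR a * R <= p)%R ->
  (INR b * R <= q)%R -> (INR c * R <= s)%R -> (p + q + s <= 1)%R -> (INR x * R <= 1)%R.
Proof.
move=> /leP H R0 h1 h2 h3 h4; apply le_INR in H; rewrite !plus_INR in H.
have := Rmult_le_compat_r _ _ _ R0 H. lra.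
Qed.

Lemma cl4 (x a b c d : nat) R p q s t : x <= a + b + c + d -> (0 <= R)%R -> (INR a * R <= p)%R ->
  (INR b * R <= q)%R -> (INR c * R <= s)%R -> (INR d * R <= t)%R -> (p + q + s + t <= 1)%R -> (INR x * R <= 1)%R.
Proof.
move=> /leP H R0 h1 h2 h3 h4 h5; apply le_INR in H; rewrite !plus_INR in H.
have := Rmult_le_compat_r _ _ _ R0 H. lra.
Qed.

Section Main.
Variables (T : finType) (e : rel T).
Hypothesis esym : symmetric e.
Hypothesis eirr : irreflexive e.

Definition dg (S : {set T}) := forall S' : {set T}, S' \subset S -> S' != set0 ->
  exists2 v, v \in S' & #|NS e S' v| <= 2.

Variable S : {set T}.
Hypothesis HK : forall (S' : {set T}) k, S' \subset S -> #|S'| + k <= #|S| -> 0 < k ->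
   (INR (cnt e S') * r ^ #|S| <= r ^ k)%R.
Let R0 : (0 <= r ^ #|S|)%R. Proof. apply pow_le; apply Rlt_le, r_pos. Qed.

Lemma inNS (S' : {set T}) v u : u \in NS e S' v = (u \in S') && e v u.
Proof. by rewrite inE. Qed.

Lemma L1 v u w : v \in S -> NS e S v = [set u] -> w \in S -> w != v -> e u w ->
  (INR (cnt e S) * r ^ #|S| <= 1)%R.
Proof.
move=> vS Nv wS wv euw.
have : u \in NS e S v by rewrite Nv set11.
rewrite inNS => /andP[uS evu].
have uv : u != v by apply: contraTneq evu => ->; rewrite eirr.
have uw : u != w by apply: contraTneq euw => ->; rewrite eirr.
have vw : v != w by rewrite eq_sym.
have [h1 [h2 [h3 [h4 [h5 h6]]]]] := rfacts.
apply: (cl2 (F1_1 esym vS Nv) R0).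
- apply: (HK (k:=1)) => //; first exact: subsetDl.
  by apply: (excl1 (a:=v)) => //; [exact: subsetDl | rewrite !inE eqxx].
- apply: (HK (k:=3)) => //; first exact: subsetDl.
  apply: (excl3 (a:=u) (b:=v) (c:=w)) => //; first exact: subsetDl.
  + by rewrite !inE eqxx.
  + by rewrite !inE eqxx !orbT.
  + by rewrite !inE euw !orbT.
- simpl in *; lra.
Qed.


Lemma L0 v : v \in S -> NS e S v = set0 -> (INR (cnt e S) * r ^ #|S| <= 1)%R.
Proof.
move=> vS Nv; have [h1 [h2 [h3 [h4 [h5 h6]]]]] := rfacts.
have H : cnt e S <= cnt e (S :\ v) + 0 by rewrite addn0; exact: (F1_0 esym vS Nv).
apply: (cl2 H R0).
- apply: (HK (k:=1)) => //; first exact: subsetDl.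
  by apply: (excl1 (a:=v)) => //; [exact: subsetDl | rewrite !inE eqxx].
- by rewrite Rmult_0_l; apply: Rle_refl.
- simpl in *; lra.
Qed.

Lemma L1' v u : v \in S -> NS e S v = [set u] -> (forall w, w \in S -> e u w -> w = v) ->
  (INR (cnt e S) * r ^ #|S| <= 1)%R.
Proof.
move=> vS Nv noext.
have : u \in NS e S v by rewrite Nv set11.
rewrite inNS => /andP[uS evu].
have uv : u != v by apply: contraTneq evu => ->; rewrite eirr.
have [h1 [h2 [h3 [h4 [h5 h6]]]]] := rfacts.
have uS' : u \in S :\ v by rewrite !inE uv.
have Nu : NS e (S :\ v) u = set0.
  apply/setP => y; rewrite !inE; apply/negbTE/negP => /andP[/andP[yv yS] euy].
  by move: yv; rewrite (noext y yS euy) eqxx.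
have H := leq_trans (F1_1 esym vS Nv) (leq_add (F1_0 esym uS' Nu) (leqnn _)).
apply: (cl2 H R0).
- apply: (HK (k:=2)) => //; first by apply: subset_trans (subsetDl _ _) (subsetDl _ _).
  apply: (excl2 (a:=u) (b:=v)) => //; first by apply: subset_trans (subsetDl _ _) (subsetDl _ _).
  + by rewrite !inE eqxx.
  + by rewrite !inE eqxx !andbF.
- apply: (HK (k:=2)) => //; first exact: subsetDl.
  apply: (excl2 (a:=u) (b:=v)) => //; first exact: subsetDl.
  + by rewrite !inE eqxx.
  + by rewrite !inE eqxx !orbT.
- simpl in *; lra.
Qed.


Lemma Lboth v u w x y : v \in S -> NS e S v = [set u; w] -> u != w ->
  x \in S -> x != v -> x != w -> e u x -> y \in S -> y != v -> y != u -> e w y ->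
  (INR (cnt e S) * r ^ #|S| <= 1)%R.
Proof.
move=> vS Nv uw xS xv xw eux yS yv yu ewy.
have : u \in NS e S v by rewrite Nv !inE eqxx.
rewrite inNS => /andP[uS evu].
have : w \in NS e S v by rewrite Nv !inE eqxx orbT.
rewrite inNS => /andP[wS evw].
have uv : u != v by apply: contraTneq evu => ->; rewrite eirr.
have wv : w != v by apply: contraTneq evw => ->; rewrite eirr.
have ux : u != x by apply: contraTneq eux => ->; rewrite eirr.
have wy : w != y by apply: contraTneq ewy => ->; rewrite eirr.
have [h1 [h2 [h3 [h4 [h5 h6]]]]] := rfacts.
apply: (cl3 (F1_2 esym vS Nv uw) R0).
- apply: (HK (k:=1)) => //; first exact: subsetDl.
  by apply: (excl1 (a:=v)) => //; [exact: subsetDl | rewrite !inE eqxx].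
- apply: (HK (k:=4)) => //; first exact: subsetDl.
  apply: (@excl4 _ _ _ u v w x (subsetDl _ _)) => //; try by rewrite eq_sym.
  + by rewrite !inE eqxx.
  + by rewrite !inE eqxx !orbT.
  + by rewrite !inE evw !orbT.
  + by rewrite !inE eux !orbT.
- apply: (HK (k:=4)) => //; first exact: subsetDl.
  apply: (@excl4 _ _ _ w v u y (subsetDl _ _)) => //; try by rewrite eq_sym.
  + by rewrite !inE eqxx.
  + by rewrite !inE eqxx !orbT.
  + by rewrite !inE evu !orbT.
  + by rewrite !inE ewy !orbT.
- simpl in *; lra.
Qed.

Lemma L2 v u w : v \in S -> NS e S v = [set u; w] -> u != w ->
  (forall x, x \in S -> e u x -> (x == v) || (x == w)) ->
  (INR (cnt e S) * r ^ #|S| <= 1)%R.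
Proof.
move=> vS Nv uw noext.
have : u \in NS e S v by rewrite Nv !inE eqxx.
rewrite inNS => /andP[uS evu].
have : w \in NS e S v by rewrite Nv !inE eqxx orbT.
rewrite inNS => /andP[wS evw].
have uv : u != v by apply: contraTneq evu => ->; rewrite eirr.
have wv : w != v by apply: contraTneq evw => ->; rewrite eirr.
have [h1 [h2 [h3 [h4 [h5 h6]]]]] := rfacts.
case euw: (e u w); last first.
  apply: (@L1 u v w) => //; last by rewrite eq_sym.
  apply/setP => y; rewrite !inE; apply/idP/idP.
    case/andP => yS euy; case/orP: (noext y yS euy) => // /eqP yw.
    by move: euw; rewrite -yw euy.
  by move/eqP => ->; rewrite vS esym.
have uS' : u \in S :\ v by rewrite !inE uv.
have Nu : NS e (S :\ v) u = [set w].
  apply/setP => y; rewrite !inE; apply/idP/idP.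
    case/andP => /andP[yv yS] euy; case/orP: (noext y yS euy) => //.
    by rewrite (negbTE yv).
  by move/eqP => ->; rewrite wv wS euw.
set Y := S :\: Nc e w.
have HYa : cnt e (S :\ v :\: (Nc e w :|: Nc e u)) <= cnt e Y.
  apply: cnt_mono; apply: subset_trans (setSD _ (subsetDl S [set v])) (setDS S (subsetUl _ _)).
have HYb : cnt e (S :\: (Nc e w :|: Nc e v)) <= cnt e Y.
  apply: cnt_mono; exact: setDS S (subsetUl _ _).
have H := leq_add (leq_add (F1_1 esym uS' Nu) (leqnn (cnt e (S :\: (Nc e u :|: Nc e v))))) HYb.
have H2 := leq_trans (F1_2 esym vS Nv uw) H.
have H3 : cnt e S <= cnt e (S :\ v :\ u) + cnt e (S :\: (Nc e u :|: Nc e v)) + cnt e Y + cnt e Y.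
  move: H2 HYa; lia.
have YS : Y \subset S by exact: subsetDl.
have XuS : S :\: (Nc e u :|: Nc e v) \subset S by exact: subsetDl.
have Xu3 : #|S :\: (Nc e u :|: Nc e v)| + 3 <= #|S|.
  apply: (@excl3 _ _ _ u v w) => //; try by rewrite eq_sym.
  + by rewrite !inE eqxx.
  + by rewrite !inE eqxx !orbT.
  + by rewrite !inE evw !orbT.
have SvuS : S :\ v :\ u \subset S by apply: subset_trans (subsetDl _ _) (subsetDl _ _).
case: (boolP [exists y, [&& y \in S, y != u, y != v & e w y]]).
  case/existsP => y /and4P[yS yu yv ewy].
  have wy : w != y by apply: contraTneq ewy => ->; rewrite eirr.
  apply: (cl4 H3 R0).
  - apply: (HK (k:=2)) => //.
    apply: (excl2 (a:=u) (b:=v)) => //; by rewrite !inE eqxx ?andbF.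
  - exact: (HK (k:=3)).
  - apply: (HK (k:=4)) => //.
    apply: (@excl4 _ _ _ w u v y) => //; try by rewrite eq_sym.
    + by rewrite !inE eqxx.
    + by rewrite !inE esym euw !orbT.
    + by rewrite !inE esym evw !orbT.
    + by rewrite !inE ewy !orbT.
  - apply: (HK (k:=4)) => //.
    apply: (@excl4 _ _ _ w u v y) => //; try by rewrite eq_sym.
    + by rewrite !inE eqxx.
    + by rewrite !inE esym euw !orbT.
    + by rewrite !inE esym evw !orbT.
    + by rewrite !inE ewy !orbT.
  - simpl in *; lra.
move=> noy.
have wS' : w \in S :\ v :\ u by rewrite !inE wv eq_sym uw.
have Nw : NS e (S :\ v :\ u) w = set0.
  apply/setP => y; rewrite !inE; apply/negbTE/negP => /andP[/andP[yu /andP[yv yS]] ewy].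
  by move/negP: noy; apply; apply/existsP; exists y; rewrite yS yu yv ewy.
have H4 := leq_trans H3 (leq_add (leq_add (leq_add (F1_0 esym wS' Nw) (leqnn _)) (leqnn _)) (leqnn _)).
have Y3 : #|Y| + 3 <= #|S|.
  apply: (@excl3 _ _ _ w u v) => //; try by rewrite eq_sym.
  + by rewrite !inE eqxx.
  + by rewrite !inE esym euw !orbT.
  + by rewrite !inE esym evw !orbT.
apply: (cl4 H4 R0).
- apply: (HK (k:=3)) => //; first by apply: subset_trans (subsetDl _ _) SvuS.
  apply: (excl3 (a:=u) (b:=v) (c:=w)) => //; first by apply: subset_trans (subsetDl _ _) SvuS.
  all: try by rewrite eq_sym.
  all: try by rewrite !inE eqxx ?andbF.
- exact: (HK (k:=3)).
- exact: (HK (k:=3)).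
- exact: (HK (k:=3)).
- simpl in *; lra.
Qed.


End Main.

Lemma INR_expn m n : INR (expn m n) = (INR m ^ n)%R.
Proof. elim: n => [|n IH]; first by rewrite expn0. by rewrite expnS -multE mult_INR IH. Qed.

Section Final.
Variables (T : finType) (e : rel T).
Hypothesis esym : symmetric e.
Hypothesis eirr : irreflexive e.

Lemma dg_sub (S S' : {set T}) : dg e S -> S' \subset S -> dg e S'.
Proof. by move=> H sub S'' s2 ne; apply: H => //; apply: subset_trans s2 sub. Qed.

Lemma cnt0 : cnt e set0 <= 1.
Proof.
rewrite -(cards1 (set0 : {set T})); apply: subset_leq_card; apply/subsetP => D.
by rewrite !inE subset0 => /andP[/eqP -> _].
Qed.

Lemma main_set n : forall S : {set T}, #|S| <= n -> dg e S ->
  (INR (cnt e S) * r ^ #|S| <= 1)%R.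
Proof.
elim: n => [|n IH] S Sn dgS.
  have S0 : S = set0 by apply: cards0_eq; move: Sn; rewrite leqn0 => /eqP.
  rewrite S0 cards0 /= Rmult_1_r; have := cnt0 => /leP /le_INR; simpl; lra.
case: (boolP (S == set0)) => [/eqP S0|neS].
  rewrite S0 cards0 /= Rmult_1_r; have := cnt0 => /leP /le_INR; simpl; lra.
have HK : forall (S' : {set T}) k, S' \subset S -> #|S'| + k <= #|S| -> 0 < k ->
   (INR (cnt e S') * r ^ #|S| <= r ^ k)%R.
  move=> S' k sub hk k0.
  have hS' : #|S'| <= n by move: hk k0 Sn; lia.
  have h := IH S' hS' (dg_sub dgS sub).
  have -> : #|S| = #|S'| + k + (#|S| - (#|S'| + k)) by rewrite subnKC.
  rewrite !pow_add.
  have r0 := r_pos.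
  have a0 : (0 <= r ^ #|S'|)%R by apply: pow_le; lra.
  have b0 : (0 <= r ^ k)%R by apply: pow_le; lra.
  have c0 : (0 <= r ^ (#|S| - (#|S'| + k)))%R by apply: pow_le; lra.
  have c1 : (r ^ (#|S| - (#|S'| + k)) <= 1)%R.
    have [_ [_ [_ [_ [_ h6]]]]] := rfacts. rewrite -(pow1 (#|S| - (#|S'| + k))); apply: pow_incr; lra.
  move: h a0 b0 c0 c1; set A := (r ^ #|S'|)%R; set B := (r ^ k)%R; set C := (r ^ (_ - _))%R.
  move=> h a0 b0 c0 c1.
  have -> : (INR (cnt e S') * (A * B * C) = (INR (cnt e S') * A) * (B * C))%R by ring.
  have bc0 : (0 <= B * C)%R by apply: Rmult_le_pos.
  apply: Rle_trans (Rmult_le_compat_r _ _ _ bc0 h) _.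
  nra.
have [v vS] := dgS S (subxx S) neS.
case: (posnP #|NS e S v|) => [/cards0_eq N0 _|dpos dle].
  exact: (L0 esym HK vS N0).
case: (boolP (#|NS e S v| == 1)) => [/cards1P [u Nu]|d1].
  case: (boolP [exists w, [&& w \in S, w != v & e u w]]).
    case/existsP => w /and3P[wS wv euw].
    exact: (L1 esym eirr HK vS Nu wS wv euw).
  move=> now; apply: (L1' esym eirr HK vS Nu) => w wS euw.
  apply/eqP; apply: contraNT now => wv; apply/existsP; exists w; by rewrite wS wv euw.
have /cards2P [u [w [uw Nuw]]] : #|NS e S v| == 2.
  by move: dpos dle d1; case: #|_| => [|[|[|]]].
case: (boolP [exists x, [&& x \in S, x != v, x != w & e u x]]) => [bu|nbu]; last first.
  apply: (L2 esym eirr HK vS Nuw uw) => x xS eux.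
  apply: contraNT nbu; rewrite negb_or => /andP[xv xw]; apply/existsP; exists x.
  by rewrite xS xv xw eux.
case: (boolP [exists y, [&& y \in S, y != v, y != u & e w y]]) => [bw|nbw]; last first.
  have Nwu : NS e S v = [set w; u] by rewrite Nuw setUC.
  apply: (L2 esym eirr HK vS Nwu) => [|y yS ewy]; first by rewrite eq_sym.
  apply: contraNT nbw; rewrite negb_or => /andP[yv yu]; apply/existsP; exists y.
  by rewrite yS yv yu ewy.
case/existsP: bu => x /and4P[xS xv xw eux].
case/existsP: bw => y /and4P[yS yv yu ewy].
exact: (Lboth esym eirr HK vS Nuw uw xS xv xw eux yS yv yu ewy).
Qed.


Lemma pw_dg (B : seq {set T}) : path_decomposition e B ->
  all (fun X : {set T} => #|X| <= 3) B -> dg e setT.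
Proof.
move=> [cov [edg intv]] small S' _ neS.
pose A x := [pred i : 'I_(size B) | x \in nth set0 B i].
pose lst x := \max_(i in A x) (i : nat).
have lstP : forall x, x \in nth set0 B (lst x) /\ lst x < size B.
  move=> x; have [X XB xX] := cov x.
  have i0A : Ordinal (etrans (index_mem X B) XB) \in A x by rewrite inE /= nth_index.
  have hA : 0 < #|A x| by apply/card_gt0P; exists (Ordinal (etrans (index_mem X B) XB)).
  rewrite /lst; have [j jA ->] := eq_bigmax_cond (fun i : 'I_(size B) => (i : nat)) hA.
  by split; [exact: jA | exact: ltn_ord].
have lstM : forall x j, j < size B -> x \in nth set0 B j -> j <= lst x.
  move=> x j jB xj; exact: (@leq_bigmax_cond _ (fun i => i \in A x) (fun i : 'I_(size B) => (i : nat)) (Ordinal jB)).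
have [x0 x0S] := set0Pn _ neS.
pose v := [arg min_(x < x0 in S') lst x].
have [vS vmin] : v \in S' /\ forall x, x \in S' -> lst v <= lst x.
  by rewrite /v; case: arg_minnP => // y yS H; split.
exists v => //.
have [vt tB] := lstP v.
set X := nth set0 B (lst v).
have XB : X \in B by apply: mem_nth.
have sub : NS e S' v \subset X :\ v.
  apply/subsetP => u; rewrite !inE => /andP[uS evu].
  have -> : u != v by apply: contraTneq evu => ->; rewrite eirr.
  have [Y YB /andP[vY uY]] := edg _ _ evu.
  have jB : index Y B < size B by rewrite index_mem.
  have jv : index Y B <= lst v by apply: lstM => //; rewrite nth_index.
  have [uu uB] := lstP u.
  apply: (intv u (index Y B) (lst v) (lst u)) => //.
  - exact: vmin.
  - by rewrite nth_index.
apply: leq_trans (subset_leq_card sub) _.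
have := all_nthP set0 small (lst v) tB; rewrite -/X => hX.
move: hX; rewrite (cardsD1 v X) vt; lia.
Qed.

Theorem main_bound : simple_graph e -> pathwidth_le e 2 ->
  expn (num_induced_matchings e) 3 <= expn 4 #|T|.
Proof.
move=> _ [B [pd sm]].
have dgT := pw_dg pd sm.
have H := main_set (leqnn #|[set: T]|) dgT.
have -> : num_induced_matchings e = cnt e setT.
  by rewrite /num_induced_matchings /cnt; apply: eq_card => D; rewrite !inE subsetT.
move: H; rewrite cardsT; set c := cnt e setT; set n := #|T| => H.
have r0 := r_pos.
have c0 : (0 <= INR c)%R by apply: pos_INR.
have p0 : (0 <= INR c * r ^ n)%R by apply: Rmult_le_pos => //; apply: pow_le; lra.
have H3 : ((INR c * r ^ n) ^ 3 <= 1)%R.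
  rewrite -(pow1 3); apply: pow_incr; lra.
have E : ((r ^ n) ^ 3 = (/ 4) ^ n)%R by rewrite -pow_mult Nat.mul_comm pow_mult r3.
rewrite Rpow_mult_distr E in H3.
apply/leP; apply: INR_le; rewrite !INR_expn.
have q0 : (0 < (INR 4) ^ n)%R by apply: pow_lt; simpl; lra.
have : ((/ 4) ^ n * (INR 4) ^ n = 1)%R.
  rewrite -Rpow_mult_distr; have -> : (/ 4 * INR 4 = 1)%R by simpl; field.
  exact: pow1.
simpl in *.
nra.
Qed.

End Final.

Import ssrnat.

Lemma neq_by (T : finType) (A B : {set T}) x : x \in A -> x \notin B -> A != B.
Proof. by move=> xA xB; apply: contraNneq xB => <-. Qed.

Definition a0 : 'I_3 := @Ordinal 3 0 isT.
Definition a1 : 'I_3 := @Ordinal 3 1 isT.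
Definition a2 : 'I_3 := @Ordinal 3 2 isT.

Lemma k3s : simple_graph K3.
Proof. split; [move=> i j; rewrite /K3 eq_sym // | move=> i; rewrite /K3 eqxx //]. Qed.

Lemma k3p : pathwidth_le K3 2.
Proof.
exists [:: setT]; split; last by rewrite /= cardsT card_ord.
split; [move=> x; exists setT; rewrite ?inE //|split].
- move=> x y _; exists setT; rewrite ?inE //.
- move=> x [|i] [|j] [|k] //= _ _ ; rewrite ?ltnS //.
Qed.

Lemma k3pair (a b : 'I_3) : a != b -> induced_matching K3 [set a; b].
Proof.
move=> ab; apply/forallP => x; apply/implyP; rewrite !inE => /orP[] /eqP ->; apply/cards1P.
- exists b; apply/setP => y; rewrite !inE /K3.
  by case: (eqVneq y a) => [->|ya]; rewrite ?eqxx ?(negbTE ab) //= ?andbT ?orbF // eq_sym.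
- exists a; apply/setP => y; rewrite !inE /K3.
  case: (eqVneq y b) => [->|yb]; rewrite ?eqxx ?andbF ?orbT //=.
  - by rewrite eq_sym (negbTE ab).
  - by rewrite orbF andbT.
Qed.

Lemma k3count : num_induced_matchings K3 = 4.
Proof.
apply/eqP; rewrite eqn_leq; apply/andP; split.
  have h := main_bound k3s.1 k3s.2 k3s k3p.
  rewrite card_ord in h.
  set c := num_induced_matchings K3 in h *.
  by move: h; case: c => [|[|[|[|[|c]]]]] //; rewrite !expnS; lia.
pose s := [:: set0; [set a0; a1]; [set a0; a2]; [set a1; a2]].
have us : uniq s.
  rewrite /s /= !inE !negb_or.
  have n1 : (set0 : {set 'I_3}) != [set a0; a1] by rewrite eq_sym (@neq_by _ _ _ a0) // !inE.
  have n2 : (set0 : {set 'I_3}) != [set a0; a2] by rewrite eq_sym (@neq_by _ _ _ a0) // !inE.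
  have n3 : (set0 : {set 'I_3}) != [set a1; a2] by rewrite eq_sym (@neq_by _ _ _ a1) // !inE.
  have n4 : [set a0; a1] != [set a0; a2] by rewrite (@neq_by _ _ _ a1) // !inE.
  have n5 : [set a0; a1] != [set a1; a2] by rewrite (@neq_by _ _ _ a0) // !inE.
  have n6 : [set a0; a2] != [set a1; a2] by rewrite (@neq_by _ _ _ a0) // !inE.
  by rewrite n1 n2 n3 n4 n5 n6.
have : size s <= #|[set D : {set 'I_3} | induced_matching K3 D]|.
  rewrite cardE; apply: uniq_leq_size => // D; rewrite mem_enum /s !inE.
  case/or4P => /eqP ->; try by apply: k3pair.
  by apply/forallP => x; rewrite inE.
by [].
Qed.

Theorem mainTheorem14 :
  (forall (T : finType) (e : rel T), simple_graph e -> pathwidth_le e 2 ->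
     num_induced_matchings e ^ 3 <= 4 ^ #|T|)
  /\ (simple_graph K3 /\ pathwidth_le K3 2 /\
      num_induced_matchings K3 ^ 3 = 4 ^ #|'I_3|).
Proof.
split.
  move=> T e sg pw; exact: (main_bound sg.1 sg.2 sg pw).
split; first exact: k3s.
split; first exact: k3p.
by rewrite k3count card_ord.
Qed.
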